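(* Let $m_1\le m_2\le\dots\le m_k$ be nonnegative integers, $n=\sum_r m_r$, and $T_1,\dots,T_n\in\{H,L\}$ with $0\le H<L$. Let $(x_1,\dots,x_n)$ be the decision sequence output by Algorithm 1 on this input. If $i<j$ and $T_i=T_j$, then $x_i\le x_j$.
   Context: Algorithm 1 (simulation-based threshold algorithm). Input: integers $0\le m_1\le\dots\le m_k$ and a sequence $T_1,\dots,T_n$ with $n=\sum_r m_r$. Set $q^{(1)}_r=m_r$ for all $r$. For $t=1,\dots,n$: set $x_t=\mathrm{TA}(q^{(t)}_1,\dots,q^{(t)}_k;\,T_t,T_{t+1},\dots,T_n)$ and $q^{(t+1)}_r=q^{(t)}_r-\mathbf{1}(x_t=r)$ for each $r$. Output $\mathbf{x}=(x_1,\dots,x_n)$. Subroutine $\mathrm{TA}(m_1,\dots,m_k;\,S_1,\dots,S_N)$ (ThresholdAllocation), with the convention $m_0:=0$: for $\gamma=k,k-1,\dots,1$: if $m_\gamma=m_{\gamma-1}$, go to the next $\gamma$; otherwise, for $h=\gamma,\gamma+1,\dots,k$: let $Z_L=\sum_{i=1}^{h-1}\min\{m_i,m_{\gamma-1}\}$ and $Z_H=\sum_{i=\gamma}^{h}(m_i-m_{\gamma-1})$; if $|\{i\in\{1,\dots,Z_L+Z_H\}: S_i>S_1\}|\ge Z_L$, return $\gamma$ (agent to which $S_1$ is assigned). *)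

(* Defs.v *)
From HB Require Import structures.
From mathcomp Require Import all_boot all_order all_algebra.
Set Implicit Arguments. Unset Strict Implicit. Unset Printing Implicit Defensive.
Import Order.TTheory GRing.Theory Num.Theory.

(* Agents are numbered 1..k; the quotas m_1..m_k are stored in a
   seq nat [:: m_1; ...; m_k].  mget m i = m_i, with the convention m_0 = 0. *)
Definition mget (m : seq nat) (i : nat) : nat :=
  if i is i'.+1 then nth 0%N m i' else 0%N.

Section TA.
Variable R : realDomainType.

Definition ZL (m : seq nat) (gamma h : nat) : nat :=
  (\sum_(1 <= i < h) minn (mget m i) (mget m gamma.-1))%N.

Definition ZH (m : seq nat) (gamma h : nat) : nat :=
  (\sum_(gamma <= i < h.+1) (mget m i - mget m gamma.-1))%N.

Definition TA_test (m : seq nat) (S : seq R) (gamma h : nat) : bool :=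
  (ZL m gamma h <=
     count (fun s => nth 0%R S 0 < s)%R (take (ZL m gamma h + ZH m gamma h) S))%N.

Definition TA_ok (m : seq nat) (S : seq R) (gamma : nat) : bool :=
  (mget m gamma != mget m gamma.-1) &&
  has (TA_test m S gamma) (iota gamma (size m - gamma).+1).

(* ThresholdAllocation: the first gamma in k, k-1, ..., 1 that succeeds;
   0 if none (this never happens on the inputs of Algorithm 1). *)
Definition TA (m : seq nat) (S : seq R) : nat :=
  let gs := rev (iota 1 (size m)) in
  nth 0%N gs (find (TA_ok m S) gs).

Definition qupdate (q : seq nat) (x : nat) : seq nat :=
  mkseq (fun i => nth 0%N q i - (i.+1 == x))%N (size q).

Fixpoint alg_from (q : seq nat) (T : seq R) : seq nat :=
  match T with
  | [::] => [::]
  | _ :: T' => let x := TA q T in x :: alg_from (qupdate q x) T'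
  end.

Definition algorithm1 (m : seq nat) (T : seq R) : seq nat := alg_from m T.

End TA.

(* Main.v *)
Require Import Defs.
From HB Require Import structures.
From mathcomp Require Import all_boot all_order all_algebra.
From mathcomp Require Import zify.
Import Order.TTheory GRing.Theory Num.Theory.
Set Implicit Arguments. Unset Strict Implicit. Unset Printing Implicit Defensive.

Definition sortq (q : seq nat) := forall i j, (i <= j)%N -> (j <= size q)%N -> (mget q i <= mget q j)%N.
Definition zpre (q : seq nat) g := forall i, (0 < i < g)%N -> mget q i = 0%N.

Lemma mget0 q : mget q 0 = 0%N. Proof. by []. Qed.

Lemma mget_big q i : (size q < i)%N -> mget q i = 0%N.
Proof. case: i => [|i] //= Hi; rewrite nth_default //; lia. Qed.

Lemma mget_qupdate q x i : mget (qupdate q x) i = (mget q i - (i == x))%N.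
Proof.
case: i => [|i] //=.
case: (ltnP i (size q)) => Hi.
  by rewrite /qupdate nth_mkseq.
by rewrite !nth_default // /qupdate size_mkseq.
Qed.

Lemma size_qupdate q x : size (qupdate q x) = size q.
Proof. by rewrite /qupdate size_mkseq. Qed.

Lemma sortq_sorted m : sorted leq m -> sortq m.
Proof.
move=> Hs [|i] [|j] //= Hij Hj.
have := sorted_leq_nth leq_trans leqnn 0%N Hs.
move=> /(_ i j); rewrite !inE; apply; lia.
Qed.

Lemma qupdate_cons a q x : qupdate (a :: q) x = (a - (1 == x))%N :: qupdate q x.-1.
Proof.
apply: (@eq_from_nth _ 0%N); first by rewrite size_qupdate [RHS]/= size_qupdate.
move=> i; rewrite size_qupdate /= => Hi.
have := mget_qupdate (a :: q) x i.+1; rewrite /= => ->.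
case: i Hi => [|i] Hi //=.
have := mget_qupdate q x.-1 i.+1; rewrite /= => ->.
congr (_ - _)%N; case: x => [|x] //=.
Qed.

Lemma qupdate0 q : qupdate q 0 = q.
Proof.
apply: (@eq_from_nth _ 0%N); first by rewrite size_qupdate.
move=> i Hi; have := mget_qupdate q 0 i.+1; rewrite /= => ->; by rewrite subn0.
Qed.

Lemma sumn_qupdate q x : (0 < mget q x)%N -> sumn (qupdate q x) = (sumn q).-1.
Proof.
elim: q x => [|a q IH] x Hx; first by case: x Hx => [|[|x]].
rewrite qupdate_cons [sumn (_ :: _)]/= [sumn (a :: q)]/=.
case: x Hx => [|[|x]] Hx //=.
  rewrite qupdate0 /= in Hx *; lia.
rewrite /= in Hx; rewrite IH //.
have : (0 < sumn q)%N.
  elim: q x Hx {IH} => [|b q IH2] [|x] //= Hx; first lia.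
  have := IH2 _ Hx; lia.
lia.
Qed.

Section TAfacts.
Variable R : realDomainType.

Lemma TA_spec q (S : seq R) g :
  (0 < g <= size q)%N -> TA_ok q S g ->
  [/\ TA_ok q S (TA q S), (0 < TA q S <= size q)%N &
      forall g', (0 < g' <= size q)%N -> TA_ok q S g' -> (g' <= TA q S)%N].
Proof.
move=> Hg Hok; rewrite /TA.
set k := size q; set gs := rev (iota 1 k).
have Hsz : size gs = k by rewrite size_rev size_iota.
have Hnth : forall i, (i < k)%N -> nth 0%N gs i = (k - i)%N.
  move=> i Hi; rewrite nth_rev ?size_iota // nth_iota; lia.
have Hhas : has (TA_ok q S) gs.
  apply/hasP; exists g => //; rewrite mem_rev mem_iota; lia.
have Hf : (find (TA_ok q S) gs < k)%N by rewrite -Hsz -has_find.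
have okTA := nth_find 0%N Hhas.
split => //.
  rewrite Hnth //; lia.
move=> g' Hg' Hok'.
have : (find (TA_ok q S) gs <= k - g')%N.
  rewrite leqNgt; apply/negP => Hlt.
  have := before_find 0%N Hlt; rewrite Hnth; last lia.
  have -> : (k - (k - g') = g')%N by lia.
  by rewrite Hok'.
rewrite Hnth //; lia.
Qed.

End TAfacts.

Lemma sum_nat_le m n (F G : nat -> nat) :
  (forall i, (m <= i < n)%N -> (F i <= G i)%N) ->
  (\sum_(m <= i < n) F i <= \sum_(m <= i < n) G i)%N.
Proof.
move=> HFG; rewrite big_nat_cond [X in (_ <= X)%N]big_nat_cond.
by apply: leq_sum => i /andP[Hi _]; apply: HFG.
Qed.

Lemma sum_nat_ext m n (F G : nat -> nat) :
  (forall i, (m <= i < n)%N -> F i = G i) ->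
  \sum_(m <= i < n) F i = \sum_(m <= i < n) G i.
Proof.
move=> HFG; rewrite big_nat_cond [RHS]big_nat_cond.
by apply: eq_bigr => i /andP[Hi _]; apply: HFG.
Qed.

Lemma term_le_sum m n i (F : nat -> nat) :
  (m <= i < n)%N -> (F i <= \sum_(m <= j < n) F j)%N.
Proof.
move=> /andP[H1 H2].
rewrite (@big_cat_nat _ _ _ i) //=; last lia.
rewrite [X in (_ <= _ + X)%N]big_ltn //; lia.
Qed.

Lemma count_take_mono T (p : pred T) n1 n2 s :
  (n1 <= n2)%N -> (count p (take n1 s) <= count p (take n2 s))%N.
Proof.
move=> Hn; rewrite -(take_takel s Hn).
rewrite -[X in (_ <= count p X)%N](cat_take_drop n1 (take n2 s)) count_cat.
exact: leq_addr.
Qed.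

Lemma first_pos q : (0 < sumn q)%N ->
  exists g, [/\ (0 < g <= size q)%N, (0 < mget q g)%N & zpre q g].
Proof.
move=> Hs.
have Hex : exists i, (0 < mget q i)%N.
  elim: q Hs => [|a q IH] //= Hs.
  case: (posnP a) => Ha.
    have Hs2 : (0 < sumn q)%N by lia. have [i Hi] := IH Hs2.
    exists i.+1; case: i Hi => [|i] //=.
  by exists 1%N.
case: (ex_minnP Hex) => g Hg Hmin.
exists g; split => //.
- apply/andP; split; first by case: g Hg Hmin.
  rewrite leqNgt; apply/negP => Hlt; by rewrite mget_big in Hg.
- move=> i /andP[Hi1 Hi2]; apply/eqP; rewrite -leqn0 leqNgt; apply/negP => Hp.
  have := Hmin i Hp; lia.
Qed.

Section TAfacts2.
Variable R : realDomainType.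

Lemma ok_first q (S : seq R) g :
  (0 < g <= size q)%N -> (0 < mget q g)%N -> zpre q g -> TA_ok q S g.
Proof.
move=> Hg Hpos Hz; apply/andP; split.
  have -> : mget q g.-1 = 0%N.
    case: g Hg Hpos Hz => [|[|g]] //= Hg Hpos Hz.
    by have := Hz g.+1; rewrite /=; apply; lia.
  by rewrite -lt0n.
apply/hasP; exists g; first by rewrite mem_iota; lia.
rewrite /TA_test.
have -> : ZL q g g = 0%N.
  rewrite /ZL big_nat_cond big1 // => i /andP[/andP[Hi1 Hi2] _].
  by rewrite Hz ?min0n //; lia.
by [].
Qed.

Lemma ok_ge_zpre q (S : seq R) g y : zpre q g -> TA_ok q S y -> (g <= y)%N.
Proof.
move=> Hz /andP[Hne _]; rewrite leqNgt; apply/negP => Hlt.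
have h1 : mget q y = 0%N.
  case: y Hlt Hne => [|y] Hlt Hne //; apply: Hz; lia.
have h2 : mget q y.-1 = 0%N.
  case: y Hlt Hne h1 => [|[|y]] Hlt Hne h1 //; apply: Hz; lia.
by rewrite h1 h2 in Hne.
Qed.

Lemma ok_h q (S : seq R) g : (g <= size q)%N -> TA_ok q S g ->
  exists h, [/\ (g <= h <= size q)%N & TA_test q S g h].
Proof.
move=> Hg /andP[_ /hasP[h Hh Ht]]; exists h; split => //.
move: Hh; rewrite mem_iota; lia.
Qed.

End TAfacts2.

Lemma sum_delta m n y (F G : nat -> nat) : (m <= y < n)%N ->
  (forall i, (m <= i < n)%N -> F i = G i + (i == y))%N ->
  (\sum_(m <= i < n) F i = \sum_(m <= i < n) G i + 1)%N.
Proof.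
move=> /andP[H1 H2] HFG.
rewrite (@big_cat_nat _ _ _ y) //=; last lia.
rewrite [in RHS](@big_cat_nat _ _ _ y) //=; last lia.
rewrite (@big_ltn _ _ _ y n F) // (@big_ltn _ _ _ y n G) //.
rewrite HFG ?eqxx; last lia.
rewrite (@sum_nat_ext m y F G); last first.
  move=> i Hi; rewrite HFG; last lia.
  have -> : (i == y) = false by apply/eqP; lia.
  by rewrite addn0.
rewrite (@sum_nat_ext y.+1 n F G); last first.
  move=> i Hi; rewrite HFG; last lia.
  have -> : (i == y) = false by apply/eqP; lia.
  by rewrite addn0.
lia.
Qed.

Lemma ZL_prefix q g h : (g <= h)%N -> (ZL q g g <= ZL q g h)%N.
Proof.
move=> Hgh; rewrite /ZL.
case: g Hgh => [|g] Hgh; first by rewrite big_geq.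
rewrite (@big_cat_nat _ _ _ g.+1 1 h) //=; lia.
Qed.

Lemma ZL_zero_zpre q g : sortq q -> (g <= size q)%N -> ZL q g g = 0%N -> zpre q g.
Proof.
move=> Hs Hg Hz i /andP[Hi1 Hi2].
have := @term_le_sum 1 g i (fun i => minn (mget q i) (mget q g.-1)).
rewrite -/(ZL q g g) Hz => /(_ (ltac:(lia))).
have := Hs i g.-1 (ltac:(lia)) (ltac:(lia)).
lia.
Qed.

Section Steps.
Variable R : realDomainType.

Lemma TA_good q (S : seq R) : sortq q -> sumn q = size S -> S <> [::] ->
  [/\ TA_ok q S (TA q S), (0 < TA q S <= size q)%N,
      (mget q (TA q S).-1 < mget q (TA q S))%N &
      forall g, zpre q g -> (g <= TA q S)%N].
Proof.
move=> Hs Hsum Hne.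
have Hpos : (0 < sumn q)%N by rewrite Hsum; case: S Hne Hsum.
have [g [Hg Hgp Hgz]] := first_pos Hpos.
have Hokg := ok_first S Hg Hgp Hgz.
have [Hok Hb _] := TA_spec Hg Hokg.
split => //.
- move: (Hok) => /andP[Hneq _].
  have := Hs (TA q S).-1 (TA q S) (leq_pred _) (ltac:(lia)).
  move: Hneq; move/eqP; lia.
- by move=> g' Hz; apply: ok_ge_zpre Hz Hok.
Qed.

Lemma sortq_update q x : sortq q -> (0 < x <= size q)%N -> (mget q x.-1 < mget q x)%N ->
  sortq (qupdate q x).
Proof.
move=> Hs Hx Hlt i j Hij; rewrite size_qupdate => Hj.
rewrite !mget_qupdate.
have := Hs i j Hij Hj.
case: (eqVneq i x) => Hix; case: (eqVneq j x) => Hjx /=; try lia.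
subst j; have Hi : (i < x)%N by rewrite ltn_neqAle Hix Hij.
have := Hs i x.-1 (ltac:(lia)) (ltac:(lia)); lia.
Qed.

End Steps.

Lemma sum_plus1 m n (F G : nat -> nat) :
  (forall i, (m <= i < n)%N -> F i = G i + 1)%N ->
  (\sum_(m <= i < n) F i = \sum_(m <= i < n) G i + (n - m))%N.
Proof.
move=> HFG; rewrite (sum_nat_ext HFG) big_split /= sum_nat_const_nat muln1 //.
Qed.

Lemma sum_split m p n (F : nat -> nat) : (m <= p)%N -> (p <= n)%N ->
  (\sum_(m <= i < n) F i = \sum_(m <= i < p) F i + \sum_(p <= i < n) F i)%N.
Proof. by move=> H1 H2; rewrite (@big_cat_nat _ _ _ p m n). Qed.

Lemma take_cons' T (x : T) s n : take n.+1 (x :: s) = x :: take n s.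
Proof. by []. Qed.

Section Inv.
Variable R : realDomainType.
Variables H L : R.
Hypothesis HL : (H < L)%R.

Definition Inv q (S : seq R) g h :=
  (ZL q g h <= count (fun s => H < s)%R (take (ZL q g h + ZH q g h) S))%N.

Lemma count_gtL (S : seq R) : all (fun s => (s == H) || (s == L)) S ->
  count (fun s => L < s)%R S = 0%N.
Proof.
elim: S => [|s S IH] //= /andP[/orP[/eqP->|/eqP->] Hall]; rewrite IH //.
- by rewrite ltNge (ltW HL).
- by rewrite ltxx.
Qed.

Lemma count_take_le T (p : pred T) n s : (count p (take n s) <= count p s)%N.
Proof. by rewrite -[X in (_ <= count p X)%N](cat_take_drop n s) count_cat leq_addr. Qed.

Lemma L_head q (R' : seq R) : sortq q -> sumn q = size (L :: R') ->
  all (fun s => (s == H) || (s == L)) (L :: R') -> zpre q (TA q (L :: R')).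
Proof.
move=> Hs Hsum Hall.
have [Hok Hb Hlt _] := TA_good Hs Hsum (ltac:(discriminate)).
have Hb2 : (TA q (L :: R') <= size q)%N by lia.
have [h [Hh Ht]] := ok_h Hb2 Hok.
apply: ZL_zero_zpre => //.
move: Ht; rewrite /TA_test [nth _ _ 0]/= => Ht.
have := count_take_le (fun s => L < s)%R (ZL q (TA q (L :: R')) h + ZH q (TA q (L :: R')) h) (L :: R').
rewrite [X in (_ <= X)%N]count_gtL // => Hc.
have Hth : (TA q (L :: R') <= h)%N by lia.
have Hp := ZL_prefix q Hth.
apply/eqP; rewrite -leqn0; apply: (leq_trans Hp); apply: (leq_trans Ht); exact: Hc.
Qed.


Lemma H_step q (R' : seq R) x h : (0 < x <= h)%N -> (h <= size q)%N ->
  (mget q x.-1 < mget q x)%N -> TA_test q (H :: R') x h ->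
  Inv (qupdate q x) R' x h.
Proof.
move=> Hx Hh Hlt Ht.
have Ea : mget (qupdate q x) x.-1 = mget q x.-1.
  rewrite mget_qupdate; have -> : (x.-1 == x) = false by apply/eqP; lia.
  by rewrite subn0.
have EZL : ZL (qupdate q x) x h = ZL q x h.
  rewrite /ZL Ea; apply: sum_nat_ext => i Hi; rewrite mget_qupdate.
  case: (eqVneq i x) => Hix /=; last by rewrite subn0.
  subst i; lia.
have EZH : ZH q x h = (ZH (qupdate q x) x h + 1)%N.
  rewrite /ZH Ea; apply: (@sum_delta _ _ x); first lia.
  move=> i Hi; rewrite mget_qupdate.
  case: (eqVneq i x) => Hix /=; last by rewrite !subn0 addn0.
  subst i; lia.
rewrite /Inv EZL; move: Ht; rewrite /TA_test EZH addnA addn1 take_cons' /=.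
by rewrite ltxx.
Qed.

Lemma inv_from q q2 (R' : seq R) g h :
  (ZL q2 g h + 1 <= ZL q g h)%N ->
  ((ZL q g h + ZH q g h).-1 <= ZL q2 g h + ZH q2 g h)%N ->
  Inv q (L :: R') g h -> Inv q2 R' g h.
Proof.
rewrite /Inv; set N := (ZL q g h + ZH q g h); set N2 := (ZL q2 g h + ZH q2 g h).
move=> H1 H2 H3.
have H4 : (count (fun s => H < s)%R (take N (L :: R')) <= 1 + count (fun s => H < s)%R (take N.-1 R'))%N.
  case: (N) => [|n] //=; by rewrite HL.
have H5 := count_take_mono (fun s => H < s)%R R' H2.
have H6 := leq_trans H3 H4.
move: H5 H6; set c1 := count _ (take N.-1 R'); set c2 := count _ (take N2 R').
lia.
Qed.

Lemma L_step q (R' : seq R) g h y : sortq q -> (0 < g <= h)%N -> (h <= size q)%N ->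
  zpre q y -> (0 < y <= size q)%N -> (0 < mget q y)%N ->
  Inv q (L :: R') g h -> Inv (qupdate q y) R' g h.
Proof.
move=> Hs Hg Hh Hz Hy Hpos Hinv.
set q2 := qupdate q y.
case: (leqP g y) => Hgy.
  have Ha : mget q g.-1 = 0%N.
    case: g Hg Hgy {Hinv} => [|[|g]] Hg Hgy //; apply: Hz; lia.
  have Ha2 : mget q2 g.-1 = 0%N by rewrite /q2 mget_qupdate Ha.
  have E0 : ZL q2 g h = 0%N.
    rewrite /ZL Ha2 big_nat_cond big1 // => i _; by rewrite minn0.
  by rewrite /Inv E0.
case: (ltnP y g.-1) => Hyg.
  have Ea : mget q2 g.-1 = mget q g.-1.
    rewrite /q2 mget_qupdate; have -> : (g.-1 == y) = false by apply/eqP; lia.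
    by rewrite subn0.
  have EZL : ZL q g h = (ZL q2 g h + 1)%N.
    rewrite /ZL Ea; apply: (@sum_delta _ _ y); first lia.
    move=> i Hi; rewrite /q2 mget_qupdate.
    case: (eqVneq i y) => Hiy /=; last by rewrite !subn0 addn0.
    subst i; have := Hs y g.-1 (ltac:(lia)) (ltac:(lia)); lia.
  have EZH : ZH q2 g h = ZH q g h.
    rewrite /ZH Ea; apply: sum_nat_ext => i Hi; rewrite /q2 mget_qupdate.
    have -> : (i == y) = false by apply/eqP; lia.
    by rewrite subn0.
  apply: (inv_from (q := q)) => //; first lia.
  rewrite EZL EZH; lia.
have Eyg : y = g.-1 by lia.
have Ea : mget q2 g.-1 = (mget q g.-1 - 1)%N.
  by rewrite /q2 mget_qupdate -Eyg eqxx.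
have Hapos : (0 < mget q g.-1)%N by rewrite -Eyg.
have EZL : ZL q g h = (ZL q2 g h + (h - y))%N.
  rewrite /ZL Ea (@sum_split 1 y h); [|lia|lia].
  rewrite [in RHS](@sum_split 1 y h); [|lia|lia].
  rewrite (@sum_nat_ext 1 y (fun i => minn (mget q i) (mget q g.-1))
     (fun i => minn (mget q2 i) (mget q g.-1 - 1))); last first.
    move=> i Hi; rewrite /q2 mget_qupdate Hz; last lia.
    by rewrite !min0n.
  rewrite (@sum_plus1 y h (fun i => minn (mget q i) (mget q g.-1))
     (fun i => minn (mget q2 i) (mget q g.-1 - 1))); first lia.
  move=> i Hi; rewrite /q2 mget_qupdate.
  have := Hs g.-1 i (ltac:(lia)) (ltac:(lia)).
  case: (eqVneq i y) => Hiy /=.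
    subst i; rewrite -Eyg; lia.
  lia.
have EZH : ZH q2 g h = (ZH q g h + (h - y))%N.
  rewrite /ZH Ea.
  have -> : (h - y = h.+1 - g)%N by lia.
  apply: sum_plus1 => i Hi; rewrite /q2 mget_qupdate.
  have -> : (i == y) = false by apply/eqP; lia.
  have := Hs g.-1 i (ltac:(lia)) (ltac:(lia)); lia.
apply: (inv_from (q := q)) => //; first lia.
rewrite EZL EZH; lia.
Qed.

End Inv.

Lemma alg_from_cons (R : realDomainType) q (s : R) S :
  alg_from q (s :: S) = TA q (s :: S) :: alg_from (qupdate q (TA q (s :: S))) S.
Proof. by []. Qed.

Section Main.
Variable R : realDomainType.
Variables H L : R.
Hypothesis HL : (H < L)%R.

Lemma H_time q (R' : seq R) x h : sortq q -> sumn q = size (H :: R') ->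
  (0 < x <= h)%N -> (h <= size q)%N -> TA_test q (H :: R') x h ->
  (x <= TA q (H :: R'))%N.
Proof.
move=> Hs Hsum.
have [Hok Hb Hlt Hge] := TA_good Hs Hsum (ltac:(discriminate)).
move Ed : (h - x)%N => d; elim: d x Ed => [|d IH] x Ed Hx Hh Ht.
all: case: (eqVneq (mget q x) (mget q x.-1)) => Heq.
2,4: have okx : TA_ok q (H :: R') x by
       apply/andP; split => //; apply/hasP; exists h => //; rewrite mem_iota; lia.
2,3: have Hx2 : (0 < x <= size q)%N by lia.
2,3: have [_ _ Hmax] := TA_spec Hx2 okx; by apply: Hmax.
- have Ehx : h = x by lia.
  subst h.
  have EZH : ZH q x x = 0%N by rewrite /ZH big_nat1 Heq subnn.
  have EZL : ZL q x x = 0%N.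
    move: Ht; rewrite /TA_test EZH addn0 [nth _ _ 0]/=.
    case: (ZL q x x) => [|n] //.
    rewrite take_cons' /= ltxx add0n => Hc.
    have Hsz : (size (take n R') <= n)%N.
      rewrite size_take; case: ltnP => //; lia.
    have := leq_trans Hc (leq_trans (count_size _ _) Hsz); lia.
  have Hxs : (x <= size q)%N by lia.
  have Hz := ZL_zero_zpre Hs Hxs EZL.
  have Hqx : mget q x = 0%N.
    rewrite Heq; case: (posnP x.-1) => Hp; first by rewrite Hp.
    apply: Hz; lia.
  have Hz2 : zpre q x.+1.
    move=> i Hi; case: (ltnP i x) => Hix; first by apply: Hz; lia.
    have -> : i = x by lia.
    exact: Hqx.
  exact: (leq_trans (leqnSn x) (Hge _ Hz2)).
- have Hxh : (x < h)%N by lia.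
  apply: (leq_trans (leqnSn x)); apply: IH; try lia.
  have EZL : ZL q x.+1 h = ZL q x h by rewrite /ZL succnK Heq.
  have EZH : ZH q x.+1 h = ZH q x h.
    rewrite /ZH succnK (@big_ltn _ _ _ x h.+1) //; last lia.
    by rewrite Heq subnn add0n.
  by rewrite /TA_test EZL EZH.
Qed.

Definition isHL (s : R) := (s == H) || (s == L).

Lemma next_state q (s : R) S : sortq q -> sumn q = size (s :: S) ->
  let y := TA q (s :: S) in
  [/\ sortq (qupdate q y), sumn (qupdate q y) = size S, (0 < y <= size q)%N,
      (0 < mget q y)%N & TA_ok q (s :: S) y].
Proof.
move=> Hs Hsum y; unfold y.
have [Hok Hb Hlt Hge] := TA_good Hs Hsum (ltac:(discriminate)).
split => //.
- exact: sortq_update.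
- rewrite sumn_qupdate ?Hsum //; lia.
- lia.
Qed.

Lemma chainH (Rs : seq R) q x h : sortq q -> sumn q = size Rs -> all isHL Rs ->
  (0 < x <= h)%N -> (h <= size q)%N -> Inv H q Rs x h ->
  forall p, (p < size Rs)%N -> nth 0%R Rs p = H -> (x <= nth 0%N (alg_from q Rs) p)%N.
Proof.
elim: Rs q x h => [|s Rs IH] q x h Hs Hsum Hall Hx Hh Hinv p Hp Hnth //.
rewrite alg_from_cons.
have [Hs' Hsum' Hy Hpos Hok] := next_state Hs Hsum.
move: Hall => /= /andP[/orP[/eqP Es|/eqP Es] Hall]; subst s.
- have Ht : TA_test q (H :: Rs) x h := Hinv.
  have Hxy := H_time Hs Hsum Hx Hh Ht.
  case: p Hp Hnth => [|p] Hp Hnth //=.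
  have Hy2 : (TA q (H :: Rs) <= size q)%N by lia.
  have [h' [Hh' Ht']] := ok_h Hy2 Hok.
  have Hlt : (mget q (TA q (H :: Rs)).-1 < mget q (TA q (H :: Rs)))%N.
    by have [_ _ Hl _] := TA_good Hs Hsum (ltac:(discriminate)).
  have Hinv' : Inv H (qupdate q (TA q (H :: Rs))) Rs (TA q (H :: Rs)) h'.
    by apply: (H_step HL _ _ Hlt Ht'); lia.
  apply: (leq_trans Hxy); apply: (IH _ _ h') => //; try lia.
  by rewrite size_qupdate; lia.
- case: p Hp Hnth => [|p] Hp Hnth /=.
    by move: Hnth => /= Hn; move: HL; rewrite Hn ltxx.
  have Hz := L_head HL Hs Hsum (ltac:(by rewrite /= eqxx orbT Hall)).
  have Hinv' := L_step HL Hs Hx Hh Hz Hy Hpos Hinv.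
  apply: (IH _ _ h) => //; try lia.
  by rewrite size_qupdate.
Qed.

Lemma chainL (Rs : seq R) q g : sortq q -> sumn q = size Rs -> zpre q g ->
  forall p, (p < size Rs)%N -> (g <= nth 0%N (alg_from q Rs) p)%N.
Proof.
elim: Rs q => [|s Rs IH] q Hs Hsum Hz p Hp //.
rewrite alg_from_cons.
have [Hok Hb Hlt Hge] := TA_good Hs Hsum (ltac:(discriminate)).
have [Hs' Hsum' Hy Hpos _] := next_state Hs Hsum.
case: p Hp => [|p] Hp /=; first exact: Hge.
apply: IH => //.
move=> i Hi; rewrite mget_qupdate Hz //.
Qed.

Lemma main_aux (T : seq R) q : sortq q -> sumn q = size T -> all isHL T ->
  forall i j, (i < j)%N -> (j < size T)%N -> nth 0%R T i = nth 0%R T j ->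
  (nth 0%N (alg_from q T) i <= nth 0%N (alg_from q T) j)%N.
Proof.
elim: T q => [|s T IH] q Hs Hsum Hall i j Hij Hj Heq //.
rewrite alg_from_cons.
have [Hs' Hsum' Hy Hpos Hok] := next_state Hs Hsum.
have Hall' : all isHL T by case/andP: Hall.
case: i Hij Heq => [|i] Hij Heq; case: j Hij Hj Heq => [|j] Hij Hj Heq //=.
- move: Heq => /= Heq.
  move: (Hall) => /= /andP[/orP[/eqP Es|/eqP Es] _];
    move: Heq Hok Hpos Hy Hsum' Hs' Hall Hsum; rewrite Es => Heq Hok Hpos Hy Hsum' Hs' Hall Hsum.
  + have Hy2 : (TA q (H :: T) <= size q)%N by lia.
    have [h' [Hh' Ht']] := ok_h Hy2 Hok.
    have Hlt : (mget q (TA q (H :: T)).-1 < mget q (TA q (H :: T)))%N.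
      by have [_ _ Hl _] := TA_good Hs Hsum (ltac:(discriminate)).
    have Hinv' : Inv H (qupdate q (TA q (H :: T))) T (TA q (H :: T)) h'.
      by apply: (H_step HL _ _ Hlt Ht'); lia.
    apply: (chainH Hs' Hsum' Hall' (h := h')) => //; try lia.
    by rewrite size_qupdate; lia.
  + have Hz := L_head HL Hs Hsum Hall.
    have Hj2 : (j < size T)%N by rewrite /= in Hj; lia.
    apply: (chainL Hs' Hsum') => //.
    move=> k Hk; rewrite mget_qupdate Hz //.
- apply: IH => //; lia.
Qed.

End Main.

Unset Implicit Arguments.

(* Indices are 0-based: position i of the seq corresponds to T_{i+1}, x_{i+1}. *)
Theorem lemma5 (R : realDomainType) (H L : R) (m : seq nat) (T : seq R) :
  (0 <= H)%R -> (H < L)%R ->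
  sorted leq m ->
  all (fun s => (s == H) || (s == L)) T ->
  size T = sumn m ->
  forall i j : nat, (i < j)%N -> (j < size T)%N ->
  nth 0%R T i = nth 0%R T j ->
  (nth 0%N (algorithm1 m T) i <= nth 0%N (algorithm1 m T) j)%N.
Proof.
move=> H0 HL Hsort Hall Hsize i j Hij Hj Heq.
rewrite /algorithm1.
exact: (main_aux HL (sortq_sorted Hsort) (esym Hsize) Hall Hij Hj Heq).
Qed.
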